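(* Let $p$ be a prime number and $(t,R_1,R_2)\in\mathcal{F}$. The map $F_{t,R_1,R_2}=(J,H):\mathrm{S}^2_p\times\mathrm{S}^2_p\to\mathbb{Q}_p^2$, $J=R_1z_1+R_2z_2$, $H=(1-t)z_1+t(x_1x_2+y_1y_2+z_1z_2)$, has exactly four rank $0$ critical points, namely $P=(0,0,1,0,0,1)$, $Q=(0,0,-1,0,0,1)$, $S=(0,0,1,0,0,-1)$, $T=(0,0,-1,0,0,-1)$.
   Context: $\mathrm{S}^2_p=\{(x,y,z)\in\mathbb{Q}_p^3:x^2+y^2+z^2=1\}$ is the $p$-adic sphere (a $p$-adic analytic manifold of dimension $2$), and $(x_1,y_1,z_1,x_2,y_2,z_2)$ are the coordinates on $\mathrm{S}^2_p\times\mathrm{S}^2_p$. $\mathcal{F}=\{(t,R_1,R_2)\in\mathbb{Z}_p\times\mathbb{Q}_p^2:|R_2|_p>|R_1|_p>0\}$. A rank $0$ critical point is a point $m$ with $dJ_m=dH_m=0$. *)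

(* Defs.v *)
From mathcomp Require Import all_boot all_order all_algebra.
From mathcomp Require Import mpoly.
Set Implicit Arguments. Unset Strict Implicit. Unset Printing Implicit Defensive.
Import Order.TTheory GRing.Theory Num.Theory.
Local Open Scope ring_scope.

Definition padic_abs_rat (p : nat) (q : rat) : rat :=
  if q == 0 then 0
  else (p%:R ^+ logn p `|denq q|%N) / (p%:R ^+ logn p `|numq q|%N).

(* A model of the field Q_p of p-adic numbers: a field K with a
   non-archimedean absolute value (valued in Q, as p-adic values lie in p^Z),
   restricting to the p-adic absolute value on the canonical copy of Q,
   complete, and in which Q is dense.  Such a K is the completion of
   (Q, |.|_p), hence isometrically isomorphic to Q_p. *)
Record padic_field (p : nat) := PadicField {
  pf_car :> fieldType;
  pf_abs : pf_car -> rat;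
  pf_abs_eq0 : forall x, (pf_abs x = 0) <-> (x = 0);
  pf_abs_ge0 : forall x, 0 <= pf_abs x;
  pf_absM : forall x y, pf_abs (x * y) = pf_abs x * pf_abs y;
  pf_abs_ultra : forall x y, pf_abs (x + y) <= Num.max (pf_abs x) (pf_abs y);
  pf_abs_rat : forall q : rat, pf_abs (ratr q) = padic_abs_rat p q;
  pf_complete : forall u : nat -> pf_car,
    (forall eps : rat, 0 < eps -> exists N, forall m n, (N <= m)%N -> (N <= n)%N ->
        pf_abs (u m - u n) < eps) ->
    exists l, forall eps : rat, 0 < eps -> exists N, forall n, (N <= n)%N ->
        pf_abs (u n - l) < eps;
  pf_dense : forall (x : pf_car) (eps : rat), 0 < eps ->
    exists q : rat, pf_abs (x - ratr q) < eps
}.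

Section Maps.
Variable K : fieldType.

Definition vx1 : 'I_6 := inord 0.
Definition vy1 : 'I_6 := inord 1.
Definition vz1 : 'I_6 := inord 2.
Definition vx2 : 'I_6 := inord 3.
Definition vy2 : 'I_6 := inord 4.
Definition vz2 : 'I_6 := inord 5.

Definition pt6 (x1 y1 z1 x2 y2 z2 : K) : 'I_6 -> K :=
  fun i => nth 0 [:: x1; y1; z1; x2; y2; z2] i.

Definition sph1 : {mpoly K[6]} := 'X_vx1 ^+ 2 + 'X_vy1 ^+ 2 + 'X_vz1 ^+ 2 - 1.
Definition sph2 : {mpoly K[6]} := 'X_vx2 ^+ 2 + 'X_vy2 ^+ 2 + 'X_vz2 ^+ 2 - 1.

Definition on_SxS (m : 'I_6 -> K) : Prop := sph1.@[m] = 0 /\ sph2.@[m] = 0.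

Definition Jpoly (R1 R2 : K) : {mpoly K[6]} := R1 *: 'X_vz1 + R2 *: 'X_vz2.
Definition Hpoly (t : K) : {mpoly K[6]} :=
  (1 - t) *: 'X_vz1 + t *: ('X_vx1 * 'X_vx2 + 'X_vy1 * 'X_vy2 + 'X_vz1 * 'X_vz2).

Definition diff (f : {mpoly K[6]}) (m v : 'I_6 -> K) : K :=
  \sum_(i < 6) (mderiv i f).@[m] * v i.

(* tangent space of S^2 x S^2 (regular level set of (sph1, sph2)) at m *)
Definition tangent (m v : 'I_6 -> K) : Prop :=
  diff sph1 m v = 0 /\ diff sph2 m v = 0.

Definition rank0_critical (J H : {mpoly K[6]}) (m : 'I_6 -> K) : Prop :=
  on_SxS m /\ forall v, tangent m v -> diff J m v = 0 /\ diff H m v = 0.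
End Maps.

(* Main.v *)
Require Import Defs.
From mathcomp Require Import all_boot all_order all_algebra.
From mathcomp Require Import mpoly.
From mathcomp Require Import ring.
Import Order.TTheory GRing.Theory Num.Theory.
Local Open Scope ring_scope.

Section D.
Variable K : fieldType.
Implicit Types (f g : {mpoly K[6]}) (m v : 'I_6 -> K).

Lemma mev_dX m i j : (mderiv i ('X_j : {mpoly K[6]})).@[m] = (j == i)%:R.
Proof.
rewrite mderivX mevalZ mnm1E; case: eqP => [->|_]; last by rewrite mul0r.
have -> : (U_(i) - U_(i))%MM = 0%MM by apply/mnmP => k; rewrite mnmBE mnm0E subnn.
by rewrite mpolyX0 meval1 mulr1.
Qed.

Lemma diffD f g m v : diff (f + g) m v = diff f m v + diff g m v.
Proof. rewrite /diff -big_split; apply: eq_bigr => i _. by rewrite mderivD mevalD mulrDl. Qed.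
Lemma diffB f g m v : diff (f - g) m v = diff f m v - diff g m v.
Proof. rewrite /diff -sumrB; apply: eq_bigr => i _. by rewrite mderivB mevalB mulrBl. Qed.
Lemma diffZ c f m v : diff (c *: f) m v = c * diff f m v.
Proof. rewrite /diff mulr_sumr; apply: eq_bigr => i _. by rewrite mderivZ mevalZ mulrA. Qed.
Lemma diffM f g m v : diff (f * g) m v = f.@[m] * diff g m v + g.@[m] * diff f m v.
Proof.
rewrite /diff !mulr_sumr -big_split; apply: eq_bigr => i _.
rewrite mderivM mevalD !mevalM.
simpl; ring.
Qed.
Lemma diffX i m v : diff 'X_i m v = v i.
Proof.
rewrite /diff (bigD1 i) //= mev_dX eqxx mul1r big1 ?addr0 // => j /negPf.
by rewrite mev_dX eq_sym => ->; rewrite mul0r.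
Qed.
Lemma diff1 m v : diff 1 m v = 0.
Proof. rewrite /diff big1 // => i _. by rewrite -mpolyC1 mderivC meval0 mul0r. Qed.
Lemma diffX2 f m v : diff (f ^+ 2) m v = 2 * f.@[m] * diff f m v.
Proof. rewrite expr2 diffM; ring. Qed.
End D.

Section M.
Variable K : fieldType.
Implicit Types (m v : 'I_6 -> K).
Lemma p1 (a b c d e f : K) : pt6 a b c d e f vx1 = a. Proof. by rewrite /pt6 /vx1 inordK. Qed.
Lemma p2 (a b c d e f : K) : pt6 a b c d e f vy1 = b. Proof. by rewrite /pt6 /vy1 inordK. Qed.
Lemma p3 (a b c d e f : K) : pt6 a b c d e f vz1 = c. Proof. by rewrite /pt6 /vz1 inordK. Qed.
Lemma p4 (a b c d e f : K) : pt6 a b c d e f vx2 = d. Proof. by rewrite /pt6 /vx2 inordK. Qed.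
Lemma p5 (a b c d e f : K) : pt6 a b c d e f vy2 = e. Proof. by rewrite /pt6 /vy2 inordK. Qed.
Lemma p6 (a b c d e f : K) : pt6 a b c d e f vz2 = f. Proof. by rewrite /pt6 /vz2 inordK. Qed.

Lemma dS1 m v : diff (sph1 K) m v = 2 * (m vx1 * v vx1 + m vy1 * v vy1 + m vz1 * v vz1).
Proof. rewrite /sph1 diffB diff1 !diffD !diffX2 !diffX !mevalXU; ring. Qed.
Lemma dS2 m v : diff (sph2 K) m v = 2 * (m vx2 * v vx2 + m vy2 * v vy2 + m vz2 * v vz2).
Proof. rewrite /sph2 diffB diff1 !diffD !diffX2 !diffX !mevalXU; ring. Qed.
Lemma dJ R1 R2 m v : diff (Jpoly R1 R2) m v = R1 * v vz1 + R2 * v vz2.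
Proof. by rewrite /Jpoly diffD !diffZ !diffX. Qed.
Lemma dH t m v : diff (Hpoly t) m v = (1 - t) * v vz1 + t * (m vx1 * v vx2 + m vx2 * v vx1
   + m vy1 * v vy2 + m vy2 * v vy1 + m vz1 * v vz2 + m vz2 * v vz1).
Proof. rewrite /Hpoly diffD !diffZ !diffD !diffM !diffX !mevalXU; ring. Qed.
Lemma eS1 m : (sph1 K).@[m] = m vx1 ^+ 2 + m vy1 ^+ 2 + m vz1 ^+ 2 - 1.
Proof. by rewrite /sph1 !expr2 mevalB !mevalD !mevalM !mevalXU meval1. Qed.
Lemma eS2 m : (sph2 K).@[m] = m vx2 ^+ 2 + m vy2 ^+ 2 + m vz2 ^+ 2 - 1.
Proof. by rewrite /sph2 !expr2 mevalB !mevalD !mevalM !mevalXU meval1. Qed.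

Lemma sq1 (z : K) : z ^+ 2 = 1 -> z = 1 \/ z = -1.
Proof.
move=> h; have : (z - 1) * (z + 1) = 0 by rewrite -subr_sqr h expr1n subrr.
move/eqP; rewrite mulf_eq0 subr_eq0 addr_eq0 => /orP [] /eqP; auto.
Qed.
End M.

Lemma two_neq0 (p : nat) (Qp : padic_field p) : prime p -> (2 : Qp) != 0.
Proof.
move=> pp; apply/eqP => h.
have := pf_abs_rat Qp 2%:R; rewrite ratr_nat.
rewrite h (proj2 (@pf_abs_eq0 _ Qp 0) erefl) /padic_abs_rat.
rewrite pnatr_eq0 /=.
move/eqP; rewrite eq_sym mulf_eq0 invr_eq0 !expf_eq0 !pnatr_eq0.
have p0 : (p == 0%N) = false by apply/negbTE; rewrite -lt0n; exact: prime_gt0.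
by rewrite p0 !andbF.
Qed.

Theorem proposition2p4 (p : nat) (Qp : padic_field p) (t R1 R2 : Qp) :
  prime p ->
  pf_abs t <= 1 ->
  0 < pf_abs R1 -> pf_abs R1 < pf_abs R2 ->
  forall x1 y1 z1 x2 y2 z2 : Qp,
    rank0_critical (Jpoly R1 R2) (Hpoly t) (pt6 x1 y1 z1 x2 y2 z2) <->
    [\/ (x1, y1, z1, x2, y2, z2) = (0, 0, 1, 0, 0, 1),
        (x1, y1, z1, x2, y2, z2) = (0, 0, -1, 0, 0, 1),
        (x1, y1, z1, x2, y2, z2) = (0, 0, 1, 0, 0, -1) |
        (x1, y1, z1, x2, y2, z2) = (0, 0, -1, 0, 0, -1)].
Proof.
move=> pp _ hR1 hR12 x1 y1 z1 x2 y2 z2.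
have nzR : forall R : Qp, 0 < pf_abs R -> R != 0.
  move=> R hR; apply/eqP => e; move: hR; rewrite e (proj2 (@pf_abs_eq0 _ Qp 0) erefl).
  by rewrite ltxx.
have R1n := nzR _ hR1.
have R2n : R2 != 0 by apply: nzR; apply: lt_trans hR12.
have h2 := @two_neq0 p Qp pp.
rewrite /rank0_critical /on_SxS /tangent eS1 eS2 !p1 !p2 !p3 !p4 !p5 !p6.
split.
- move=> [[S1 S2] H].
  have T a b c d e f : x1 * a + y1 * b + z1 * c = 0 -> x2 * d + y2 * e + z2 * f = 0 ->
     R1 * c + R2 * f = 0.
    move=> h1 h3; have := H (pt6 a b c d e f).
    rewrite !dS1 !dS2 dJ !p1 !p2 !p3 !p4 !p5 !p6.
    case.
      by rewrite h1 h3 mulr0.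
    by [].
  have ex1 : x1 = 0.
    have := T z1 0 (-x1) 0 0 0 ltac:(ring) ltac:(ring).
    move/eqP; rewrite ?mulr0 ?addr0 ?add0r mulf_eq0 oppr_eq0 (negbTE R1n) /=; exact/eqP.
  have ey1 : y1 = 0.
    have := T 0 z1 (-y1) 0 0 0 ltac:(ring) ltac:(ring).
    move/eqP; rewrite ?mulr0 ?addr0 ?add0r mulf_eq0 oppr_eq0 (negbTE R1n) /=; exact/eqP.
  have ex2 : x2 = 0.
    have := T 0 0 0 z2 0 (-x2) ltac:(ring) ltac:(ring).
    move/eqP; rewrite ?mulr0 ?addr0 ?add0r mulf_eq0 oppr_eq0 (negbTE R2n) /=; exact/eqP.
  have ey2 : y2 = 0.
    have := T 0 0 0 0 z2 (-y2) ltac:(ring) ltac:(ring).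
    move/eqP; rewrite ?mulr0 ?addr0 ?add0r mulf_eq0 oppr_eq0 (negbTE R2n) /=; exact/eqP.
  move: S1 S2; rewrite ex1 ey1 ex2 ey2 expr0n /= !add0r => S1 S2.
  have z1s : z1 ^+ 2 = 1 by apply/eqP; rewrite -subr_eq0 S1.
  have z2s : z2 ^+ 2 = 1 by apply/eqP; rewrite -subr_eq0 S2.
  by case: (@sq1 _ _ z1s) => ->; case: (@sq1 _ _ z2s) => ->; first [exact: Or41 | exact: Or42 | exact: Or43 | exact: Or44].
- move=> H.
  have [[ex1 [ey1 [ex2 ey2]]] [hz1 hz2]] :
    (x1 = 0 /\ y1 = 0 /\ x2 = 0 /\ y2 = 0) /\ (z1 = 1 \/ z1 = -1) /\ (z2 = 1 \/ z2 = -1).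
    by case: H => [] [-> -> -> -> -> ->]; auto.
  have z1n : z1 != 0 by case: hz1 => ->; rewrite ?oppr_eq0 oner_eq0.
  have z2n : z2 != 0 by case: hz2 => ->; rewrite ?oppr_eq0 oner_eq0.
  have z1s : z1 ^+ 2 = 1 by case: hz1 => ->; rewrite ?sqrrN expr1n.
  have z2s : z2 ^+ 2 = 1 by case: hz2 => ->; rewrite ?sqrrN expr1n.
  rewrite ex1 ey1 ex2 ey2 z1s z2s; split.
    by split; rewrite expr0n /= !add0r subrr.
  move=> v []; rewrite dS1 dS2 dJ dH !p1 !p2 !p3 !p4 !p5 !p6 => h1 h3.
  have v3 : v vz1 = 0.
    have /eqP : 2 * (z1 * v vz1) = 0 by rewrite -h1; ring.
    by rewrite !mulf_eq0 (negbTE h2) (negbTE z1n) /= => /eqP.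
  have v6 : v vz2 = 0.
    have /eqP : 2 * (z2 * v vz2) = 0 by rewrite -h3; ring.
    by rewrite !mulf_eq0 (negbTE h2) (negbTE z2n) /= => /eqP.
  rewrite v3 v6; split; ring.
Qed.
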